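(* Let $\rho$ be a smooth function on an open interval $I$ with $\rho(t)\neq0$ for all $t\in I$, and let $\mu,\sigma$ be nonzero constants. Let $U(r,y),V(r,y)$ be smooth functions on $\mathbb{R}^2$ and define, for $(x,y,t)\in\mathbb{R}^2\times I$, $$u(x,y,t)=\rho(t)^{1/3}\,U\big(\rho(t)^{1/3}x,\,y\big),\qquad v(x,y,t)=\rho(t)^{2/3}\,V\big(\rho(t)^{1/3}x,\,y\big)-\frac{\rho'(t)}{9\mu}x,$$ where $\rho^{1/3}$ denotes the real cube root. Then $(u,v)$ solves $$\rho(t)u_t+3\mu(uv)_x+\sigma u_{xxx}=0,\qquad u_x=v_y$$ if and only if $(U,V)$ solves $$3\mu(UV)_r+\sigma U_{rrr}=0,\qquad U_r-V_y=0.$$ *)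

(* Defs.v *)
From Stdlib Require Import Reals Lra.
From Coquelicot Require Import Coquelicot.
Open Scope R_scope.

Definition cbrt (x : R) : R :=
  if Rlt_dec 0 x then Rpower x (1/3)
  else if Rlt_dec x 0 then - Rpower (- x) (1/3) else 0.

Definition in_I (a b : Rbar) (t : R) : Prop := Rbar_lt a t /\ Rbar_lt t b.

Definition smooth_on (a b : Rbar) (f : R -> R) : Prop :=
  forall (n : nat) (t : R), in_I a b t -> ex_derive_n f n t.

Fixpoint Ck2 (n : nat) (f : R -> R -> R) : Prop :=
  match n with
  | O => forall x y : R, continuous (fun p : R * R => f (fst p) (snd p)) (x, y)
  | S m =>
      (forall x y : R, ex_derive (fun z => f z y) x /\ ex_derive (fun w => f x w) y)
      /\ Ck2 m f
      /\ Ck2 m (fun x y => Derive (fun z => f z y) x)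
      /\ Ck2 m (fun x y => Derive (fun w => f x w) y)
  end.

Definition smooth2 (f : R -> R -> R) : Prop := forall n, Ck2 n f.

(* Main.v *)
Require Import Defs.
From Stdlib Require Import Reals Lra.
From Coquelicot Require Import Coquelicot.
Open Scope R_scope.

Lemma rp_cube y : 0 < y -> Rpower y (1/3) ^ 3 = y.
Proof.
  intro Hy. rewrite <- Rpower_pow by (unfold Rpower; apply exp_pos).
  rewrite Rpower_mult. replace (1/3 * INR 3) with 1 by (simpl; field).
  apply Rpower_1; auto.
Qed.

Lemma cbrt_cube y : cbrt y ^ 3 = y.
Proof.
  unfold cbrt. destruct (Rlt_dec 0 y). apply rp_cube; auto.
  destruct (Rlt_dec y 0). replace ((- Rpower (- y) (1 / 3)) ^ 3) with (- (Rpower (- y) (1 / 3)^3)) by ring.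
  rewrite rp_cube; lra. simpl. lra.
Qed.

Lemma cbrt_nz y : y <> 0 -> cbrt y <> 0.
Proof. intros H E. apply H. rewrite <- (cbrt_cube y), E. ring. Qed.

Lemma cbrt_ex_derive y : y <> 0 -> ex_derive cbrt y.
Proof.
  intro Hy. destruct (Rlt_dec 0 y) as [Hp|Hn].
  - apply ex_derive_ext_loc with (f := fun z => exp (1/3 * ln z)).
    + apply filter_imp with (P := fun u => 0 < u). 2: exact (open_gt 0 y Hp).
      intros z Hz. unfold cbrt. destruct (Rlt_dec 0 z); [|lra]. reflexivity.
    + auto_derive. exact Hp.
  - assert (Hn' : y < 0) by lra.
    apply ex_derive_ext_loc with (f := fun z => - exp (1/3 * ln (- z))).
    + apply filter_imp with (P := fun u => u < 0). 2: exact (open_lt 0 y Hn').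
      intros z Hz. unfold cbrt. destruct (Rlt_dec 0 z); [lra|]. destruct (Rlt_dec z 0); [|lra]. reflexivity.
    + auto_derive. lra.
Qed.

Lemma exists_in_I a b : Rbar_lt a b -> exists t, in_I a b t.
Proof.
  unfold in_I. destruct a as [a| |], b as [b| |]; simpl; intro H; try contradiction.
  - exists ((a+b)/2); simpl; lra.
  - exists (a+1); simpl; lra.
  - exists (b-1); simpl; lra.
  - exists 0; simpl; auto.
Qed.

Fixpoint iterP (k : nat) (f : R -> R -> R) : R -> R -> R :=
  match k with O => f | S k => fun x y => Derive (fun z => iterP k f z y) x end.

Lemma smooth2_partial f : smooth2 f -> smooth2 (fun x y => Derive (fun z => f z y) x).
Proof. intros H n. destruct (H (S n)) as [_ [_ [H3 _]]]. exact H3. Qed.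

Lemma smooth2_iterP k f : smooth2 f -> smooth2 (iterP k f).
Proof. induction k; simpl; auto. intro H. apply (smooth2_partial _ (IHk H)). Qed.

Lemma Derive_n_iterP k f y z : Derive_n (fun z => f z y) k z = iterP k f z y.
Proof.
  revert z. induction k; intro z; simpl; auto. apply Derive_ext. auto.
Qed.

Lemma smooth2_exd f : smooth2 f -> forall k y z, ex_derive_n (fun z => f z y) k z.
Proof.
  intros H k y z. destruct k. simpl; auto. simpl.
  apply ex_derive_ext with (f := fun z => iterP k f z y).
  intro; symmetry; apply Derive_n_iterP.
  destruct (smooth2_iterP k f H 1%nat) as [H1 _]. apply (H1 z y).
Qed.

Lemma smooth2_dx f : smooth2 f -> forall x y, ex_derive (fun z => f z y) x.
Proof. intros H x y. destruct (H 1%nat) as [H1 _]. apply H1. Qed.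
Lemma smooth2_dy f : smooth2 f -> forall x y, ex_derive (fun w => f x w) y.
Proof. intros H x y. destruct (H 1%nat) as [H1 _]. apply H1. Qed.

Lemma cbrt_D y : y <> 0 -> 3 * cbrt y ^ 2 * Derive cbrt y = 1.
Proof.
  intro Hy. assert (E : is_derive (fun z => cbrt z ^ 3) y (3 * cbrt y ^ 2 * Derive cbrt y)).
  { auto_derive. apply cbrt_ex_derive; auto. change (fun x : R => cbrt x) with cbrt; ring. }
  assert (E2 : is_derive (fun z => z) y 1) by (auto_derive; auto).
  apply (is_derive_ext _ (fun z => z)) in E. 2: { intro; apply cbrt_cube. }
  rewrite <- (is_derive_unique _ _ _ E), (is_derive_unique _ _ _ E2). reflexivity.
Qed.

Lemma key (rho : R -> R) (mu sigma : R) (U V : R -> R -> R) t x y :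
  rho t <> 0 -> ex_derive rho t -> mu <> 0 -> smooth2 U -> smooth2 V ->
  let u := fun x y t => cbrt (rho t) * U (cbrt (rho t) * x) y in
  let v := fun x y t =>
    (cbrt (rho t)) ^ 2 * V (cbrt (rho t) * x) y - Derive rho t / (9 * mu) * x in
  let c := cbrt (rho t) in
  rho t * Derive (fun s => u x y s) t
      + 3 * mu * Derive (fun z => u z y t * v z y t) x
      + sigma * Derive_n (fun z => u z y t) 3 x
  = c ^ 4 * (3 * mu * Derive (fun z => U z y * V z y) (c * x)
      + sigma * Derive_n (fun z => U z y) 3 (c * x))
  /\ Derive (fun z => u z y t) x - Derive (fun w => v x w t) y
   = c ^ 2 * (Derive (fun z => U z y) (c * x) - Derive (fun w => V (c * x) w) y).
Proof.
  intros Hr Hd Hmu HU HV u v c.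
  assert (Hc : c <> 0) by (apply cbrt_nz; auto).
  assert (HD := cbrt_D _ Hr). fold c in HD.
  assert (Hrc : rho t = c ^ 3) by (unfold c; rewrite cbrt_cube; auto).
  assert (Hcd := cbrt_ex_derive _ Hr).
  pose proof (smooth2_dx U HU (c * x) y) as HUx.
  pose proof (smooth2_dx V HV (c * x) y) as HVx.
  pose proof (smooth2_dy V HV (c * x) y) as HVy.
  set (D := Derive cbrt (rho t)) in *.
  set (R1 := Derive rho t) in *.
  set (Ur := Derive (fun z => U z y) (c * x)).
  set (Vr := Derive (fun z => V z y) (c * x)).
  set (Vy := Derive (fun w => V (c * x) w) y).
  assert (E1 : Derive (fun s => u x y s) t = (D * R1 * U (c * x) y + c * (D * R1 * x * Ur))).
  { apply is_derive_unique. unfold u. auto_derive. repeat split; auto. change (fun x0 : R => rho x0) with rho in *; change (fun x0 : R => cbrt x0) with cbrt in *; unfold D, R1, Ur, Vr, Vy, c. ring. }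
  assert (E2 : Derive (fun z => u z y t * v z y t) x =
     (c * (c * Ur) * (c ^ 2 * V (c * x) y - R1 / (9 * mu) * x)
      + c * U (c * x) y * (c ^ 2 * (c * Vr) - R1 / (9 * mu)))).
  { apply is_derive_unique. unfold u, v. auto_derive. repeat split; auto. change (fun x0 : R => rho x0) with rho in *; change (fun x0 : R => cbrt x0) with cbrt in *; unfold D, R1, Ur, Vr, Vy, c. field. auto. }
  assert (E3 : Derive (fun z => U z y * V z y) (c * x) = (Ur * V (c * x) y + U (c * x) y * Vr)).
  { apply is_derive_unique. auto_derive. repeat split; auto. change (fun x0 : R => rho x0) with rho in *; change (fun x0 : R => cbrt x0) with cbrt in *; unfold D, R1, Ur, Vr, Vy, c. ring. }
  assert (E4 : Derive (fun z => u z y t) x = (c * (c * Ur))).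
  { apply is_derive_unique. unfold u. auto_derive. repeat split; auto. change (fun x0 : R => rho x0) with rho in *; change (fun x0 : R => cbrt x0) with cbrt in *; unfold D, R1, Ur, Vr, Vy, c. ring. }
  assert (E5 : Derive (fun w => v x w t) y = (c ^ 2 * Vy)).
  { apply is_derive_unique. unfold v. auto_derive. repeat split; auto. change (fun x0 : R => rho x0) with rho in *; change (fun x0 : R => cbrt x0) with cbrt in *; unfold D, R1, Ur, Vr, Vy, c. ring. }
  assert (E6 : Derive_n (fun z => u z y t) 3 x = c * (c ^ 3 * Derive_n (fun z => U z y) 3 (c * x))).
  { unfold u. fold c. rewrite Derive_n_scal_l.
    rewrite (Derive_n_comp_scal (fun w => U w y)). reflexivity.
    apply filter_forall. intros; apply smooth2_exd; auto. }
  rewrite E1, E2, E3, E4, E5, E6. fold Ur Vy.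
  split.
  - assert (HD' : D = / (3 * c ^ 2)) by (field_simplify_eq; [lra | auto]).
    assert (HR1 : R1 = 3 * c ^ 2 * (D * R1)) by (rewrite <- (Rmult_assoc _ D), HD; ring).
    rewrite Hrc. rewrite HD'. field. auto.
  - ring.
Qed.

Theorem mainTheorem3 (a b : Rbar) (rho : R -> R) (mu sigma : R)
  (U V : R -> R -> R) :
  Rbar_lt a b ->
  smooth_on a b rho ->
  (forall t, in_I a b t -> rho t <> 0) ->
  mu <> 0 -> sigma <> 0 ->
  smooth2 U -> smooth2 V ->
  let u := fun x y t => cbrt (rho t) * U (cbrt (rho t) * x) y in
  let v := fun x y t =>
    (cbrt (rho t)) ^ 2 * V (cbrt (rho t) * x) y - Derive rho t / (9 * mu) * x in
  (forall x y t, in_I a b t ->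
      rho t * Derive (fun s => u x y s) t
      + 3 * mu * Derive (fun z => u z y t * v z y t) x
      + sigma * Derive_n (fun z => u z y t) 3 x = 0
      /\ Derive (fun z => u z y t) x = Derive (fun w => v x w t) y)
  <->
  (forall r y,
      3 * mu * Derive (fun z => U z y * V z y) r
      + sigma * Derive_n (fun z => U z y) 3 r = 0
      /\ Derive (fun z => U z y) r - Derive (fun w => V r w) y = 0).
Proof.
  intros Hab Hs Hnz Hmu Hsig HU HV u v.
  assert (Hd : forall t, in_I a b t -> ex_derive rho t) by (intros t Ht; exact (Hs 1%nat t Ht)).
  split.
  - intros H r y. destruct (exists_in_I a b Hab) as [t Ht].
    assert (Hc : cbrt (rho t) <> 0) by (apply cbrt_nz; auto).
    destruct (key rho mu sigma U V t (r / cbrt (rho t)) y (Hnz t Ht) (Hd t Ht) Hmu HU HV) as [K1 K2].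
    assert (Er : cbrt (rho t) * (r / cbrt (rho t)) = r) by (field; auto).
    destruct (H (r / cbrt (rho t)) y t Ht) as [H1 H2].
    assert (Hc2 : cbrt (rho t) ^ 2 <> 0) by (apply pow_nonzero; auto).
    assert (Hc4 : cbrt (rho t) ^ 4 <> 0) by (apply pow_nonzero; auto).
    split.
    + assert (Z := eq_trans (eq_sym K1) H1). rewrite Er in Z.
      destruct (Rmult_integral _ _ Z) as [E|E]; [contradiction|exact E].
    + assert (Z := eq_trans (eq_sym K2) (Rminus_diag_eq _ _ H2)). rewrite Er in Z.
      destruct (Rmult_integral _ _ Z) as [E|E]; [contradiction|exact E].
  - intros H x y t Ht.
    destruct (key rho mu sigma U V t x y (Hnz t Ht) (Hd t Ht) Hmu HU HV) as [K1 K2].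
    destruct (H (cbrt (rho t) * x) y) as [H1 H2].
    rewrite H1, Rmult_0_r in K1. rewrite H2, Rmult_0_r in K2.
    split; [exact K1 | apply Rminus_diag_uniq; exact K2].
Qed.
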